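(* Let $\Gamma$ be a weighted digraph with normalized matrix of maximum out-forests $\bar J$, let $K$ be the vertex set of a basis bicomponent of $\Gamma$, and let $K^+$ be the set of vertices reachable by directed paths from $K$ and unreachable from all other basis bicomponents. Then: (1) the normalized matrix of maximum out-forests of the restriction $\Gamma_K$ of $\Gamma$ to $K$ coincides with the principal submatrix of $\bar J$ indexed by $K$; (2) if $i\in K^+$ and $j\in K^+\setminus K$ and $\Gamma$ has an arc $(i,j)$, then $\bar J$ does not change when the (positive) weight of this arc is varied.
   Context: A weighted digraph $\Gamma$ has no loops and each arc $(i,j)$ (from $i$ to $j$) has a positive weight. A diverging tree is a rooted directed tree with directed paths from its root to all its other vertices; an out-forest of a digraph is a spanning subgraph whose weak components are diverging trees; a maximum out-forest is one with the maximum number of arcs. The weight of a subgraph is the product of its arc weights. The normalized matrix of maximum out-forests $\bar J$ of a digraph has $(i,j)$ entry equal to the total weight of its maximum out-forests in which $i$ belongs to the tree rooted at $j$, divided by the total weight of all its maximum out-forests. A basis bicomponent is a strong component into which no arc enters from outside it. *)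

(* Defs.v *)
From HB Require Import structures.
From mathcomp Require Import all_boot all_order all_algebra.
Set Implicit Arguments. Unset Strict Implicit. Unset Printing Implicit Defensive.
Import Order.TTheory GRing.Theory Num.Theory.
Local Open Scope ring_scope.

(* A weighted digraph on the finite vertex type V is given by a weight
   function w : V -> V -> R; (i,j) is an arc iff w i j != 0.  The
   hypotheses "no loops" (w i i = 0) and "positive weights" (w i j >= 0,
   so arcs have w i j > 0) are imposed in the theorem. *)

Section Digraphs.
Variables (R : realFieldType) (V : finType).

Definition is_arc (w : V -> V -> R) (i j : V) : bool := w i j != 0.

Definition reach (w : V -> V -> R) : rel V := connect (is_arc w).

(* subgraphs are given by their arc sets F : {set V * V} (spanning) *)
Definition frel (F : {set V * V}) : rel V := [rel x y | (x, y) \in F].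
Definition wrel (F : {set V * V}) : rel V :=
  [rel x y | ((x, y) \in F) || ((y, x) \in F)].

Definition wcomp (F : {set V * V}) (x : V) : {set V} :=
  [set y | connect (wrel F) x y].

(* F is an out-forest of Gamma: F is a spanning subgraph of Gamma and each
   weak component C of F is a diverging tree, i.e. a tree (connected, with
   #|C| - 1 arcs) with a root r from which every vertex of C is reachable by
   a directed path in F. *)
Definition out_forest (w : V -> V -> R) (F : {set V * V}) : bool :=
  [forall e in F, is_arc w e.1 e.2] &&
  [forall x : V,
     [exists r in wcomp F x, [forall y in wcomp F x, connect (frel F) r y]]
     && (#|[set e in F | e.1 \in wcomp F x]| == #|wcomp F x| - 1)%N].

Definition out_forests (w : V -> V -> R) : {set {set V * V}} :=
  [set F | out_forest w F].

Definition max_forest_size (w : V -> V -> R) : nat :=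
  (\max_(F in out_forests w) #|F|)%N.

Definition max_out_forests (w : V -> V -> R) : {set {set V * V}} :=
  [set F in out_forests w | #|F| == max_forest_size w].

Definition fweight (w : V -> V -> R) (F : {set V * V}) : R :=
  \prod_(e in F) w e.1 e.2.

Definition in_tree_rooted_at (F : {set V * V}) (i j : V) : bool :=
  [forall k, (k, j) \notin F] && connect (frel F) j i.

Definition Jbar (w : V -> V -> R) (i j : V) : R :=
  (\sum_(F in max_out_forests w | in_tree_rooted_at F i j) fweight w F)
  / (\sum_(F in max_out_forests w) fweight w F).

Definition strong (w : V -> V -> R) (x y : V) : bool :=
  reach w x y && reach w y x.

Definition basis_bicomponent (w : V -> V -> R) (K : {set V}) : bool :=
  [exists x in K, K == [set y | strong w x y]] &&
  [forall i, forall j, ((i \notin K) && (j \in K)) ==> ~~ is_arc w i j].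

Definition Kplus (w : V -> V -> R) (K : {set V}) : {set V} :=
  [set v | [exists k in K, reach w k v] &&
           [forall L : {set V}, (basis_bicomponent w L && (L != K)) ==>
              [forall l in L, ~~ reach w l v]]].

Definition reweight (w : V -> V -> R) (i j : V) (c : R) : V -> V -> R :=
  fun x y => if (x == i) && (y == j) then c else w x y.

End Digraphs.

Definition restrict (R : realFieldType) (V : finType) (w : V -> V -> R)
  (K : {set V}) : {x : V | x \in K} -> {x : V | x \in K} -> R :=
  fun x y => w (val x) (val y).
Arguments restrict {R V} w K x y.

(* Main.v *)
Require Import Defs.
From HB Require Import structures.
From mathcomp Require Import all_boot all_order all_algebra.
From Stdlib Require Import FunctionalExtensionality.
Set Implicit Arguments. Unset Strict Implicit. Unset Printing Implicit Defensive.
Import Order.TTheory GRing.Theory Num.Theory.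

Local Notation fr := Defs.frel.

Lemma connect_fwd (T : finType) (e : rel T) (P : T -> Prop) x :
  P x -> (forall u v, P u -> e u v -> P v) -> forall y, connect e x y -> P y.
Proof.
move=> Px step y /connectP [p pth ->]; elim: p x Px pth => //= z p IH x Px /andP[exz pth].
exact: IH (step _ _ Px exz) pth.
Qed.

Lemma connect_bwd (T : finType) (e : rel T) (P : T -> Prop) y :
  P y -> (forall u v, P v -> e u v -> P u) -> forall x, connect e x y -> P x.
Proof.
move=> Py step x /connectP [p pth Ey].
elim: p x pth Ey => /= [|z p IH] x; first by move=> _ <-.
move=> /andP[exz pth] Ey; exact: step _ _ (IH _ pth Ey) exz.
Qed.

Lemma connect_mono (T : finType) (e1 e2 : rel T) x y :
  (forall u v, e1 u v -> e2 u v) -> connect e1 x y -> connect e2 x y.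
Proof.
move=> sub; apply: (@connect_fwd _ e1 (fun z => connect e2 x z)) => // u v cu /sub e.
exact: connect_trans cu (connect1 e).
Qed.

Lemma connect_last (T : finType) (e : rel T) x y :
  connect e x y -> x != y -> exists z, connect e x z /\ e z y.
Proof.
move=> cxy.
have H := @connect_bwd _ e (fun x => x = y \/ exists z, connect e x z /\ e z y) y
  (or_introl erefl).
case: (H _ x cxy) => [|->|//]; last by rewrite eqxx.
move=> u v [->|[z [cvz ezy]]] euv; right; first by exists u.
by exists z; split => //; apply: connect_trans (connect1 euv) cvz.
Qed.

Section Forest.
Variables (R : realFieldType) (V : finType).
Implicit Types (w : V -> V -> R) (F G A B : {set V * V}).

Definition rootF F r := [forall k, (k, r) \notin F].
Definition indeg1 F := forall u u' v, (u,v) \in F -> (u',v) \in F -> u = u'.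
Definition arcsF w F := forall e, e \in F -> is_arc w e.1 e.2.
Definition forest w F :=
  [/\ arcsF w F, indeg1 F & forall v, exists2 r, rootF F r & connect (fr F) r v].

Lemma rootFP F r : reflect (forall k, (k, r) \notin F) (rootF F r).
Proof. exact: forallP. Qed.

Lemma wcomp_closed F x u y : y \in wcomp F x -> (u, y) \in F -> u \in wcomp F x.
Proof.
rewrite !inE => cy uy; apply: connect_trans cy (connect1 _).
by rewrite /Defs.wrel /= uy orbT.
Qed.

Lemma out_forest_inner w F x : out_forest w F ->
  exists2 r, r \in wcomp F x &
   [/\ rootF F r, (forall y, y \in wcomp F x -> connect (fr F) r y) &
       (forall u u' v, v \in wcomp F x -> (u,v) \in F -> (u',v) \in F -> u = u')].
Proof.
move=> /andP[_ /forallP /(_ x) /andP[/existsP[r /andP[rC /forallP Hr]] /eqP Hcard]].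
set C := wcomp F x in rC Hr Hcard *.
have Hr' : forall y, y \in C -> connect (fr F) r y by move=> y yC; exact: (implyP (Hr y) yC).
have exin : forall y, y \in C :\ r -> exists e, (e \in F) && (e.2 == y).
  move=> y /setD1P[yr yC].
  have [z [_ zy]] := connect_last (Hr' y yC) ltac:(by rewrite eq_sym).
  by exists (z, y); rewrite /= eqxx andbT.
pose psi y := odflt (r, r) [pick e in F | e.2 == y].
have psiP : forall y, y \in C :\ r -> psi y \in F /\ (psi y).2 = y.
  move=> y /exin [e0 He0]; rewrite /psi; case: pickP => [e /andP[eF /eqP]|none] //=.
  by have := none e0; rewrite He0.
set E := [set e in F | e.1 \in C].
have sub : psi @: (C :\ r) \subset E.
  apply/subsetP => _ /imsetP[y yC ->]; have [pF p2] := psiP y yC.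
  rewrite inE pF /=; apply: (wcomp_closed (y := (psi y).2)).
    by rewrite p2; case/setD1P: yC.
  by rewrite -surjective_pairing.
have inj : {in C :\ r &, injective psi}.
  by move=> y1 y2 H1 H2 E12; rewrite -(psiP _ H1).2 -(psiP _ H2).2 E12.
have eqE : psi @: (C :\ r) = E.
  apply/eqP; rewrite eqEcard sub /= card_in_imset // Hcard.
  by rewrite (cardsD1 r C) rC add1n subn1.
have key : forall e, e \in F -> e.2 \in C -> e.2 != r /\ e = psi e.2.
  move=> e eF e2C; have : e \in E.
    rewrite inE eF /=; apply: (wcomp_closed e2C); by rewrite -surjective_pairing.
  rewrite -eqE => /imsetP[y yC ->]; rewrite (psiP y yC).2; split => //.
  by case/setD1P: yC.
exists r => //; split => //.
- by apply/rootFP => k; apply/negP => kr; case: (key (k, r) kr rC); rewrite /= eqxx.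
- move=> u u' v vC uv u'v; have [_ E1] := key _ uv vC; have [_ E2] := key _ u'v vC.
  by have /= := congr1 fst (etrans E1 (esym E2)).
Qed.

Lemma out_forest_forest w F : out_forest w F -> forest w F.
Proof.
move=> HF; split.
- move: HF => /andP[/forallP Ha _] e eF; exact: (implyP (Ha e) eF).
- move=> u u' v uv u'v; have [r _ [_ _ H]] := out_forest_inner v HF.
  by apply: H uv u'v; rewrite inE connect0.
- move=> v; have [r rC [rr Hall _]] := out_forest_inner v HF.
  by exists r => //; apply: Hall; rewrite inE connect0.
Qed.

Lemma anc_total F r r' v : indeg1 F ->
  connect (fr F) r v -> connect (fr F) r' v ->
  connect (fr F) r r' \/ connect (fr F) r' r.
Proof.
move=> ind crv cr'v.
have H := @connect_fwd _ (fr F)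
  (fun u => connect (fr F) r u /\ (connect (fr F) r' u -> connect (fr F) r r' \/ connect (fr F) r' r))
  r (conj (connect0 _ _) (fun h => or_intror h)).
case: (H _ v crv) => [|_]; last exact.
move=> u v0 [cru Hu] uv0; split; first exact: connect_trans cru (connect1 uv0).
move=> cr'v0; have [->|ne] := eqVneq r' v0.
  by left; apply: connect_trans cru (connect1 uv0).
have [z [cr'z zv0]] := connect_last cr'v0 ne.
by rewrite (ind z u v0 zv0 uv0) in cr'z; apply: Hu.
Qed.

Lemma root_uniq F r r' v : indeg1 F -> rootF F r -> rootF F r' ->
  connect (fr F) r v -> connect (fr F) r' v -> r = r'.
Proof.
move=> ind /rootFP rr /rootFP rr' crv cr'v.
have [//|ne] := eqVneq r r'.
case: (anc_total ind crv cr'v) => c.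
  by have [z [_ zr]] := connect_last c ne; move: (rr' z); rewrite (zr : (z, r') \in F).
by have [z [_ zr]] := connect_last c ltac:(by rewrite eq_sym);
  move: (rr z); rewrite (zr : (z, r) \in F).
Qed.

Lemma wrel_sym F : symmetric (wrel F).
Proof. by move=> x y; rewrite /wrel /= orbC. Qed.

Lemma forest_out w F : forest w F -> out_forest w F.
Proof.
move=> [Ha ind Hr]; apply/andP; split.
  by apply/forallP => e; apply/implyP => eF; exact: Ha.
apply/forallP => x; set C := wcomp F x.
have [r rr crx] := Hr x.
have allC : forall y, y \in C -> connect (fr F) r y.
  move=> y; rewrite inE; apply: (@connect_fwd _ (wrel F) (fun y => connect (fr F) r y)) => //.
  move=> u v cru /orP[uv|vu]; first exact: connect_trans cru (connect1 uv).
  have [r'' rr'' cr''v] := Hr v.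
  have cr''u := connect_trans cr''v (connect1 (e:=fr F) vu).
  by rewrite (root_uniq ind rr'' rr cr''u cru) in cr''v.
have rC : r \in C.
  rewrite inE (sym_connect_sym (@wrel_sym F)).
  by apply: connect_mono crx => u v uv; rewrite /wrel /= (uv : (u, v) \in F).
apply/andP; split.
  by apply/existsP; exists r; rewrite rC /=; apply/forallP => y; apply/implyP; exact: allC.
set E := [set e in F | e.1 \in C].
have inj : {in E &, injective snd}.
  move=> [a1 b1] [a2 b2]; rewrite !inE /= => /andP[e1F _] /andP[e2F _] E12.
  by rewrite E12 in e1F *; rewrite (ind _ _ _ e1F e2F).
have img : snd @: E = C :\ r.
  apply/setP => y; apply/imsetP/setD1P.
    move=> [[a b]]; rewrite inE /= => /andP[abF aC] ->; split.
      by apply/eqP => br; move/rootFP: rr => /(_ a); rewrite -br abF.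
    move: aC; rewrite !inE => cxa; apply: connect_trans cxa (connect1 _).
    by rewrite /wrel /= abF.
  move=> [yr yC]; have [z [_ zy]] := connect_last (allC y yC) ltac:(by rewrite eq_sym).
  exists (z, y) => //; rewrite inE (zy : (z, y) \in F) /=; exact: wcomp_closed yC zy.
rewrite -(card_in_imset inj) img (cardsD1 r C) rC add1n subn1 //.
Qed.

Lemma out_forestP w F : out_forest w F <-> forest w F.
Proof. by split; [apply: out_forest_forest | apply: forest_out]. Qed.

Definition cls w x := [set y | strong w x y].

Lemma strong_refl w x : strong w x x.
Proof. by rewrite /strong /reach connect0. Qed.
Lemma strong_sym w x y : strong w x y = strong w y x.
Proof. by rewrite /strong andbC. Qed.
Lemma strong_trans w x y z : strong w x y -> strong w y z -> strong w x z.
Proof.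
by rewrite /strong /reach => /andP[a b] /andP[c d]; rewrite (connect_trans a c) (connect_trans d b).
Qed.

Lemma cls_eq w x y : strong w x y -> cls w x = cls w y.
Proof.
move=> sxy; apply/setP => z; rewrite !inE; apply/idP/idP => h.
  by apply: strong_trans h; rewrite strong_sym.
exact: strong_trans sxy h.
Qed.

Lemma bb_closed w L u v : basis_bicomponent w L -> is_arc w u v -> v \in L -> u \in L.
Proof.
move=> /andP[_ /forallP H] uv vL; apply/negPn/negP => uL.
by have := implyP (forallP (H u) v); rewrite uL vL uv => /(_ isT).
Qed.

Lemma bb_reach_closed w L u v : basis_bicomponent w L -> reach w u v -> v \in L -> u \in L.
Proof.
move=> bL ruv vL; move: u ruv.
apply: (@connect_bwd _ (is_arc w) (fun u => u \in L) v vL) => a b bL' ab.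
exact: bb_closed bL ab bL'.
Qed.

Lemma bb_cls w L z : basis_bicomponent w L -> z \in L -> L = cls w z.
Proof.
move=> /andP[/existsP[x /andP[xL /eqP Lx]] _] zL; rewrite Lx; apply: cls_eq.
by move: zL; rewrite Lx inE.
Qed.

Lemma bb_strong w L x y : basis_bicomponent w L -> x \in L -> y \in L -> strong w x y.
Proof. by move=> bL xL; rewrite (bb_cls bL xL) inE. Qed.

Lemma bb_exists w v : exists2 L, basis_bicomponent w L & exists2 l, l \in L & reach w l v.
Proof.
pose anc u := [set x | reach w x u].
have vv : reach w v v by exact: connect0.
case: (@arg_minnP _ v (fun u => reach w u v) (fun u => #|anc u|) vv) => u uv umin.
exists (cls w u); last by exists u; [rewrite inE strong_refl | exact: uv].
apply/andP; split.
  by apply/existsP; exists u; rewrite inE strong_refl eqxx.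
apply/forallP => i; apply/forallP => j; apply/implyP => /andP[iC jC]; apply/negP => ij.
have iu : reach w i u.
  by apply: connect_trans (connect1 ij) _; move: jC; rewrite inE => /andP[].
have := umin i (connect_trans iu uv); apply/negP; rewrite -ltnNge.
apply: proper_card; apply/properP; split.
  by apply/subsetP => x; rewrite !inE => xi; apply: connect_trans xi iu.
exists u; first by rewrite inE /reach connect0.
rewrite inE; apply/negP => ui; by move: iC; rewrite inE /strong ui iu.
Qed.

Lemma forest_reach w F u v : arcsF w F -> connect (fr F) u v -> reach w u v.
Proof. by move=> Ha; apply: connect_mono => a b ab; exact: (Ha (a, b)). Qed.

Definition Good w F := [/\ forest w F,
  (forall r, rootF F r -> basis_bicomponent w (cls w r)) &
  (forall r r', rootF F r -> rootF F r' -> strong w r r' -> r = r')].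

Definition roots F := [set r | rootF F r].

Lemma card_forest F : indeg1 F -> #|F| + #|roots F| = #|V|.
Proof.
move=> ind; rewrite -(cardsC (roots F)) addnC; congr (_ + _).
have inj : {in F &, injective snd}.
  by move=> [a1 b1] [a2 b2] /= e1F e2F E12; rewrite E12 in e1F *; rewrite (ind _ _ _ e1F e2F).
rewrite -(card_in_imset inj); congr (#|_|).
have -> : snd @: F = ~: roots F; last by [].
apply/setP => y; rewrite !inE; apply/imsetP/idP.
  by move=> [[a b] abF ->]; apply/negP => /rootFP /(_ a); rewrite abF.
by move=> /forallPn [k]; rewrite negbK => ky; exists (k, y).
Qed.

Lemma bb_has_root w F L : forest w F -> basis_bicomponent w L -> exists2 r, rootF F r & r \in L.
Proof.
move=> [Ha _ Hr] bL; have := bL; move=> /andP[/existsP[x /andP[xL _]] _].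
have [r rr crx] := Hr x; exists r => //.
exact: bb_reach_closed bL (forest_reach Ha crx) xL.
Qed.

Lemma phi_lemma w F G : Good w G -> forest w F ->
  #|roots G| <= #|roots F| /\ (#|roots F| <= #|roots G| -> Good w F).
Proof.
move=> [fG bbG uG] fF.
pose phi g := odflt g [pick r | rootF F r && (r \in cls w g)].
have phiP : forall g, rootF G g -> rootF F (phi g) /\ phi g \in cls w g.
  move=> g gr; have [r rr rC] := bb_has_root fF (bbG g gr).
  rewrite /phi; case: pickP => [r' /andP[]|none] //=.
  by have := none r; rewrite rr rC.
have inj : {in roots G &, injective phi}.
  move=> g1 g2; rewrite !inE => g1r g2r E.
  have [_ c1] := phiP _ g1r; have [_ c2] := phiP _ g2r.
  apply: uG g1r g2r _; rewrite E !inE in c1 c2.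
  by apply: strong_trans c1 _; rewrite strong_sym.
have sub : phi @: roots G \subset roots F.
  apply/subsetP => x /imsetP[g]; rewrite inE => gr ->; rewrite inE; by case: (phiP g gr).
have le : #|roots G| <= #|roots F| by rewrite -(card_in_imset inj) subset_leq_card.
split => // ge.
have eqr : phi @: roots G = roots F by apply/eqP; rewrite eqEcard sub card_in_imset.
have Hr : forall r, rootF F r -> exists2 g, rootF G g & r = phi g.
  move=> r rr; have: r \in phi @: roots G by rewrite eqr inE.
  by case/imsetP => g; rewrite inE => gr ->; exists g.
split => //.
- move=> r rr; have [g gr ->] := Hr r rr; have [_] := phiP g gr; rewrite inE => sg.
  by rewrite -(cls_eq sg); apply: bbG.
- move=> r r' rr rr'; have [g gr Er] := Hr r rr; have [g' g'r Er'] := Hr r' rr'.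
  move=> srr'; rewrite Er Er' in srr' *.
  have [_ c1] := phiP g gr; have [_ c2] := phiP g' g'r; rewrite !inE in c1 c2.
  have gg' : g = g'.
    apply: (uG _ _ gr g'r); apply: (strong_trans c1); apply: (strong_trans srr').
    by rewrite strong_sym.
  by rewrite gg'.
Qed.

Lemma good_exists w : exists G, Good w G.
Proof.
pose R0 := [set x | basis_bicomponent w (cls w x) && (Some x == [pick y in cls w x])].
have R0cover : forall v, exists2 r, r \in R0 & reach w r v.
  move=> v; have [L bL [l lL lv]] := bb_exists w v.
  have Ll := bb_cls bL lL.
  case Ep: [pick y in cls w l] => [y0|]; last first.
    by move: Ep; case: pickP => // /(_ l); rewrite inE strong_refl.
  have y0C : y0 \in cls w l by move: Ep; case: pickP => // y1 ? [<-].
  have sl : strong w y0 l by move: y0C; rewrite inE strong_sym.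
  exists y0; last by move: sl => /andP[h _]; apply: connect_trans h lv.
  by rewrite inE (cls_eq sl) Ep eqxx andbT -Ll.
pose P v n := [exists r in R0, exists p : n.-tuple V, path (is_arc w) r p && (last r p == v)].
have hex : forall v, exists n, P v n.
  move=> v; have [r rR rv] := R0cover v; case/connectP: rv => p pth Ev.
  exists (size p); apply/existsP; exists r; rewrite rR /=; apply/existsP; exists (in_tuple p).
  by rewrite pth /= -Ev eqxx.
pose d v := ex_minn (hex v).
have dP : forall v, P v (d v) /\ forall n, P v n -> d v <= n.
  by move=> v; rewrite /d; case: ex_minnP.
have dpar : forall v, v \notin R0 -> exists u, is_arc w u v && (d u < d v).
  move=> v vR; have [Hv _] := dP v.
  move: Hv => /existsP[r /andP[rR /existsP[p /andP[pth /eqP Ev]]]].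
  have sz := size_tuple p; move: (tval p) sz pth Ev => s.
  case/lastP: s => [|s z] sz pth Ev.
    by move: Ev vR => /= <-; rewrite rR.
  rewrite rcons_path in pth; case/andP: pth => pth a.
  rewrite last_rcons in Ev; rewrite size_rcons in sz.
  subst z; exists (last r s); rewrite a /= -sz ltnS.
  have [_ Hm] := dP (last r s); apply: Hm.
  apply/existsP; exists r; rewrite rR /=; apply/existsP; exists (in_tuple s).
  by rewrite pth eqxx.
pose par v := if v \in R0 then None else [pick u | is_arc w u v && (d u < d v)].
pose G := [set e | par e.2 == Some e.1].
have parP : forall v, v \notin R0 -> exists u, [/\ par v = Some u, is_arc w u v & d u < d v].
  move=> v vR; rewrite /par (negbTE vR); case: pickP => [u /andP[a b]|none].
    by exists u.
  by have [u] := dpar v vR; rewrite none.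
have Gm : forall u v, ((u, v) \in G) = (par v == Some u) by move=> u v; rewrite inE.
have rootG : forall r, rootF G r -> r \in R0.
  move=> r /rootFP rr; apply/negPn/negP => rR; have [u [pu _ _]] := parP r rR.
  by move: (rr u); rewrite Gm pu eqxx.
have R0root : forall r, r \in R0 -> rootF G r.
  by move=> r rR; apply/rootFP => k; rewrite Gm /par rR.
exists G; split; first split.
- move=> [u v]; rewrite Gm /par /=; case: ifP => // vR.
  by case: pickP => // u' /andP[a _] /eqP [<-].
- by move=> u u' v; rewrite !Gm => /eqP -> /eqP [].
- move=> v.
  have H : forall n v, d v < n -> exists2 r, rootF G r & connect (fr G) r v.
    elim=> // n IH v0 dvn; case: (boolP (v0 \in R0)) => vR.
      by exists v0; [apply: R0root | apply: connect0].
    have [u [pu a du]] := parP v0 vR.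
    have [r rr cru] := IH u (leq_trans du dvn).
    exists r => //; apply: connect_trans cru (connect1 _).
    by change ((u, v0) \in G); rewrite Gm pu.
  exact: H (ltnSn _).
- move=> r /rootG; rewrite inE => /andP[] //.
- move=> r r' /rootG rR /rootG r'R srr'; move: rR r'R; rewrite !inE => /andP[_ /eqP E1] /andP[_ /eqP E2].
  by move: E1 E2; rewrite (cls_eq srr') => <- [->].
Qed.

Lemma maxGood w F : F \in max_out_forests w <-> Good w F.
Proof.
have [G0 gG0] := good_exists w.
have fG0 : forest w G0 by case: gG0.
have G0f : G0 \in out_forests w by rewrite inE; apply/out_forestP.
have [_ indG0 _] := fG0.
split.
- rewrite inE => /andP[]; rewrite inE => /out_forestP fF /eqP eqF.
  have le0 : #|G0| <= #|F|.
    by rewrite eqF; apply: (leq_bigmax_cond (F := fun F : {set V * V} => #|F|)).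
  have [le1 H] := phi_lemma gG0 fF; apply: H.
  have [_ indF _] := fF.
  have c1 := card_forest indF; have c2 := card_forest indG0.
  by rewrite -(leq_add2l #|G0|) c2 -c1 leq_add2r.
- move=> gF; have fF : forest w F by case: gF.
  have [_ indF _] := fF.
  have Fo : F \in out_forests w by rewrite inE; apply/out_forestP.
  rewrite inE Fo /=; apply/eqP/anti_leq/andP; split.
    by apply: (leq_bigmax_cond (F := fun F : {set V * V} => #|F|)).
  apply/bigmax_leqP => H; rewrite inE => /out_forestP fH.
  have [_ indH _] := fH.
  have [le _] := phi_lemma gF fH.
  by rewrite -(leq_add2r #|roots H|) (card_forest indH) -(card_forest indF) leq_add2l.
Qed.

Definition closedS w (S : {set V}) := forall u v, is_arc w u v -> v \in S -> u \in S.
Definition proj1 (S : {set V}) F := [set e in F | e.2 \in S].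
Definition proj2 (S : {set V}) F := [set e in F | e.2 \notin S].
Definition PS w (S : {set V}) A :=
  [/\ (forall e, e \in A -> is_arc w e.1 e.2 /\ e.2 \in S), indeg1 A,
  (forall v, v \in S -> exists2 r, (r \in S) && rootF A r & connect (fr A) r v),
  (forall r, r \in S -> rootF A r -> basis_bicomponent w (cls w r)) &
  (forall r r', r \in S -> r' \in S -> rootF A r -> rootF A r' -> strong w r r' -> r = r')].

Lemma closed_reach w (S : {set V}) u v : closedS w S -> reach w u v -> v \in S -> u \in S.
Proof.
move=> cS ruv vS; move: u ruv.
apply: (@connect_bwd _ (is_arc w) (fun u => u \in S) v vS) => a b bS ab.
exact: cS ab bS.
Qed.

Lemma rootF_proj1 (S : {set V}) F r : r \in S -> rootF (proj1 S F) r = rootF F r.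
Proof. by move=> rS; apply: eq_forallb => k; rewrite inE rS andbT. Qed.

Lemma rootF_proj2 (S : {set V}) F r : r \notin S -> rootF (proj2 S F) r = rootF F r.
Proof. by move=> rS; apply: eq_forallb => k; rewrite inE rS andbT. Qed.

Lemma restrP w (S : {set V}) F : closedS w S -> Good w F -> PS w S (proj1 S F).
Proof.
move=> cS [[Ha ind Hr] bbF uF]; split.
- by move=> e; rewrite inE => /andP[eF e2]; split => //; exact: Ha.
- by move=> u u' v; rewrite !inE => /andP[uv _] /andP[u'v _]; exact: ind uv u'v.
- move=> v vS; have [r rr crv] := Hr v.
  have H := @connect_bwd _ (fr F)
    (fun u => u \in S /\ connect (fr (proj1 S F)) u v) v (conj vS (connect0 _ _)).
  have [|rS cr] := H _ r crv.
    move=> a b [bS cb] ab; split; first exact: cS _ _ (Ha (a, b) ab) bS.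
    apply: connect_trans cb; apply: connect1.
    by change ((a, b) \in proj1 S F); rewrite inE (ab : (a, b) \in F) bS.
  by exists r => //; rewrite rS rootF_proj1.
- by move=> r rS; rewrite rootF_proj1 //; apply: bbF.
- by move=> r r' rS r'S; rewrite !rootF_proj1 //; apply: uF.
Qed.

Lemma combP w (S : {set V}) A G : closedS w S -> PS w S A -> Good w G -> Good w (A :|: proj2 S G).
Proof.
move=> cS [Aa indA HrA bbA uA] [[Ga indG HrG] bbG uG].
set H := A :|: proj2 S G.
have memH : forall u v, ((u, v) \in H) = if v \in S then (u, v) \in A else (u, v) \in G.
  move=> u v; rewrite !inE /=; case: ifP => vS; rewrite ?vS ?andbT ?andbF ?orbF //.
  by case: (boolP ((u, v) \in A)) => // /Aa [_ /= vS']; rewrite vS' in vS.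
have rootH : forall r, rootF H r = if r \in S then rootF A r else rootF G r.
  by move=> r; case: ifP => rS; apply: eq_forallb => k; rewrite memH rS.
have inS : forall v, v \in S -> exists2 r, rootF H r & connect (fr H) r v.
  move=> v vS; have [r /andP[rS rr] crv] := HrA v vS.
  exists r; first by rewrite rootH rS.
  apply: connect_mono crv => a b ab; change ((a, b) \in H); rewrite inE.
  by rewrite (ab : (a, b) \in A).
split; first split.
- move=> [u v]; rewrite memH; case: ifP => _ h; [by case: (Aa _ h) | exact: Ga].
- by move=> u u' v; rewrite !memH; case: ifP => _; [apply: indA | apply: indG].
- move=> v; have [r rr crv] := HrG v.
  have P := @connect_fwd _ (fr G) (fun u => exists2 r, rootF H r & connect (fr H) r u) r.
  apply: (P _ _ v crv).
    case: (boolP (r \in S)) => rS; first exact: inS.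
    by exists r; [rewrite rootH (negbTE rS) | apply: connect0].
  move=> a b [r' rr' cra] ab; case: (boolP (b \in S)) => bS; first exact: inS.
  exists r' => //; apply: connect_trans cra (connect1 _).
  by change ((a, b) \in H); rewrite memH (negbTE bS).
- by move=> r; rewrite rootH; case: ifP => rS rr; [apply: bbA | apply: bbG].
- move=> r r'; rewrite !rootH => + + srr'; case: (boolP (r \in S)) => rS.
    have r'S : r' \in S by apply: closed_reach cS _ rS; case/andP: srr'.
    by rewrite r'S => rr rr'; apply: uA.
  have r'S : r' \notin S.
    by apply/negP => r'S; move: rS; rewrite (closed_reach cS _ r'S) //; case/andP: srr'.
  by rewrite (negbTE r'S) => rr rr'; apply: uG.
Qed.

Lemma proj_comb w (S : {set V}) A G : PS w S A ->
  proj1 S (A :|: proj2 S G) = A /\ proj2 S (A :|: proj2 S G) = proj2 S G.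
Proof.
move=> [Aa _ _ _ _]; split; apply/setP => e; rewrite !inE.
  case: (boolP (e \in A)) => eA /=; first by case: (Aa e eA) => _ ->.
  by rewrite -andbA andNb andbF.
case: (boolP (e \in A)) => eA /=; last by rewrite -andbA andbb.
by case: (Aa e eA) => _ ->; rewrite !andbF.
Qed.

Lemma proj_union (S : {set V}) F : F = proj1 S F :|: proj2 S F.
Proof. by apply/setP => e; rewrite !inE -andb_orr orbN andbT. Qed.

Local Open Scope ring_scope.

Lemma prod_sum w (S : {set V}) (g h : {set V * V} -> R) : closedS w S ->
  \sum_(F in max_out_forests w) g (proj1 S F) * h (proj2 S F) =
  (\sum_(A in proj1 S @: max_out_forests w) g A) *
  (\sum_(B in proj2 S @: max_out_forests w) h B).
Proof.
move=> cS; set M := max_out_forests w.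
rewrite (partition_big_imset (proj1 S)) big_distrl /=; apply: eq_bigr => A HA.
rewrite (eq_bigr (fun F => g A * h (proj2 S F))); last by move=> F /andP[_ /eqP ->].
rewrite -mulr_sumr; congr (_ * _).
set D := [set F in M | proj1 S F == A].
rewrite [LHS](eq_bigl (fun F => F \in D)); last by move=> F /=; rewrite [in RHS]inE.
have inj : {in D &, injective (proj2 S)}.
  move=> F1 F2; rewrite !inE => /andP[_ /eqP E1] /andP[_ /eqP E2] E.
  by rewrite (proj_union S F1) (proj_union S F2) E1 E2 E.
rewrite -(big_imset h inj) /=; apply: eq_bigl => B.
have PA : PS w S A.
  by case/imsetP: HA => F0 F0M ->; apply: restrP cS _; apply/maxGood.
apply/imsetP/imsetP => [[F FD ->]|[G GM ->]].
  by exists F => //; move: FD; rewrite inE => /andP[].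
exists (A :|: proj2 S G); last by case: (proj_comb G PA).
rewrite inE; have [-> _] := proj_comb G PA; rewrite eqxx andbT.
apply/maxGood; apply: combP cS PA _; exact/maxGood.
Qed.

Definition Ex w (X : {set V * V} -> R) :=
  (\sum_(F in max_out_forests w) X F * fweight w F) / (\sum_(F in max_out_forests w) fweight w F).

Lemma JbarE w x y : Jbar w x y = Ex w (fun F => (in_tree_rooted_at F x y)%:R).
Proof.
rewrite /Jbar /Ex big_mkcondr; congr (_ / _); apply: eq_bigr => F _.
by case: ifP; rewrite ?mul1r ?mul0r.
Qed.

Lemma Ex_eq w X Y : (forall F, Good w F -> X F = Y F) -> Ex w X = Ex w Y.
Proof.
move=> H; rewrite /Ex; congr (_ / _); apply: eq_bigr => F /maxGood gF; by rewrite H.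
Qed.

Lemma fweight_split w (S : {set V}) F :
  fweight w F = fweight w (proj1 S F) * fweight w (proj2 S F).
Proof.
rewrite /fweight (bigID (fun e => e.2 \in S)) /=; congr (_ * _); apply: eq_bigl => e;
  by rewrite !inE.
Qed.

Lemma Esplit w (S : {set V}) g h : closedS w S ->
  Ex w (fun F => g (proj1 S F) * h (proj2 S F)) =
  ((\sum_(A in proj1 S @: max_out_forests w) g A * fweight w A) /
     (\sum_(A in proj1 S @: max_out_forests w) fweight w A)) *
  ((\sum_(B in proj2 S @: max_out_forests w) h B * fweight w B) /
     (\sum_(B in proj2 S @: max_out_forests w) fweight w B)).
Proof.
move=> cS; rewrite mulf_div /Ex -!prod_sum //; congr (_ / _); apply: eq_bigr => F _;
  rewrite (fweight_split w S F) //.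
by rewrite mulrACA.
Qed.

Lemma fweight_gt0 w F : (forall a b, 0 <= w a b) -> arcsF w F -> 0 < fweight w F.
Proof.
move=> nn Ha; apply: prodr_gt0 => e eF; rewrite lt_def nn andbT.
by have := Ha e eF.
Qed.

Lemma sum_gt0_ne (I : finType) (P : {set I}) (f : I -> R) i0 :
  i0 \in P -> (forall i, i \in P -> 0 < f i) -> 0 < \sum_(i in P) f i.
Proof.
move=> iP H; rewrite (bigD1 i0) //=; apply: ltr_pwDl; first exact: H.
by apply: sumr_ge0 => i /andP[iP' _]; apply: ltW; apply: H.
Qed.

Lemma sums_gt0 w (S : {set V}) : (forall a b, 0 <= w a b) ->
  0 < \sum_(A in proj1 S @: max_out_forests w) fweight w A /\
  0 < \sum_(B in proj2 S @: max_out_forests w) fweight w B.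
Proof.
move=> nn; have [G gG] := good_exists w; have GM : G \in max_out_forests w by apply/maxGood.
have arcsM : forall F, F \in max_out_forests w -> arcsF w F.
  by move=> F /maxGood [[]].
split.
  apply: (@sum_gt0_ne _ _ _ (proj1 S G)); first by apply: imset_f.
  move=> _ /imsetP[F FM ->]; apply: fweight_gt0 => // e; rewrite inE => /andP[eF _].
  exact: arcsM eF.
apply: (@sum_gt0_ne _ _ _ (proj2 S G)); first by apply: imset_f.
move=> _ /imsetP[F FM ->]; apply: fweight_gt0 => // e; rewrite inE => /andP[eF _].
exact: arcsM eF.
Qed.

Lemma sum_1l (P : {set {set V * V}}) (f : {set V * V} -> R) :
  \sum_(i in P) (fun=> 1) i * f i = \sum_(i in P) f i.
Proof. by apply: eq_bigr => i _; rewrite mul1r. Qed.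

Lemma Efac w (S : {set V}) g h : closedS w S -> (forall a b, 0 <= w a b) ->
  Ex w (fun F => g (proj1 S F) * h (proj2 S F)) =
  Ex w (fun F => g (proj1 S F) * 1) * Ex w (fun F => 1 * h (proj2 S F)).
Proof.
move=> cS nn; rewrite (Esplit g h) // (Esplit g (fun=> 1)) // (Esplit (fun=> 1) h) //.
have [p1 p2] := sums_gt0 S nn.
rewrite !sum_1l !divff ?mulr1 ?mul1r //; by rewrite gt_eqF.
Qed.

Lemma Einv1 w w' (S : {set V}) g :
  closedS w S -> closedS w' S -> max_out_forests w' = max_out_forests w ->
  (forall a b, 0 <= w a b) -> (forall a b, 0 <= w' a b) ->
  (forall A, A \in proj1 S @: max_out_forests w -> fweight w' A = fweight w A) ->
  Ex w' (fun F => g (proj1 S F) * 1) = Ex w (fun F => g (proj1 S F) * 1).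
Proof.
move=> cS cS' HM nn nn' Hf; rewrite (Esplit g (fun=> 1)) // (Esplit g (fun=> 1)) //.
have [_ p2] := sums_gt0 S nn; have [_ p2'] := sums_gt0 S nn'.
rewrite !sum_1l.
rewrite !divff ?mulr1 ?gt_eqF // HM; congr (_ / _); apply: eq_bigr => A HA; by rewrite Hf.
Qed.

Lemma Einv2 w w' (S : {set V}) h :
  closedS w S -> closedS w' S -> max_out_forests w' = max_out_forests w ->
  (forall a b, 0 <= w a b) -> (forall a b, 0 <= w' a b) ->
  (forall B, B \in proj2 S @: max_out_forests w -> fweight w' B = fweight w B) ->
  Ex w' (fun F => 1 * h (proj2 S F)) = Ex w (fun F => 1 * h (proj2 S F)).
Proof.
move=> cS cS' HM nn nn' Hf; rewrite (Esplit (fun=> 1) h) // (Esplit (fun=> 1) h) //.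
have [p1 _] := sums_gt0 S nn; have [p1' _] := sums_gt0 S nn'.
rewrite !sum_1l.
rewrite !divff ?mul1r ?gt_eqF // HM; congr (_ / _); apply: eq_bigr => A HA; by rewrite Hf.
Qed.

Definition qS (S : {set V}) x B := (x \in S) || [exists k in S, connect (fr B) k x].

Lemma qS_proj2 (S : {set V}) F x : qS S x (proj2 S F) = [exists k in S, connect (fr F) k x].
Proof.
apply/idP/idP.
  case/orP => [xS | /existsP[k /andP[kS ck]]].
    by apply/existsP; exists x; rewrite xS connect0.
  apply/existsP; exists k; rewrite kS /=; apply: connect_mono ck => a b ab.
  by move: (ab : (a, b) \in proj2 S F); rewrite inE => /andP[].
case/existsP => k /andP[kS ck]; move: x ck.
apply: (@connect_fwd _ (fr F) (fun u => qS S u (proj2 S F)) k); first by rewrite /qS kS.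
move=> a b qa ab; rewrite /qS; case: (boolP (b \in S)) => //= bS.
have ab2 : fr (proj2 S F) a b.
  by change ((a, b) \in proj2 S F); rewrite inE (ab : (a, b) \in F) bS.
case/orP: qa => [aS | /existsP[k' /andP[k'S ck']]]; apply/existsP.
  by exists a; rewrite aS connect1.
by exists k'; rewrite k'S (connect_trans ck' (connect1 ab2)).
Qed.

Lemma treeA w (S : {set V}) F x y : closedS w S -> arcsF w F -> y \notin S ->
  in_tree_rooted_at F x y = in_tree_rooted_at (proj2 S F) x y.
Proof.
move=> cS Ha yS.
change (rootF F y && connect (fr F) y x =
        rootF (proj2 S F) y && connect (fr (proj2 S F)) y x).
rewrite rootF_proj2 //; congr (_ && _); apply/idP/idP => c; last first.
  by apply: connect_mono c => a b ab; move: (ab : (a, b) \in proj2 S F); rewrite inE => /andP[].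
have H := @connect_fwd _ (fr F) (fun u => u \notin S /\ connect (fr (proj2 S F)) y u) y
  (conj yS (connect0 _ _)).
case: (H _ x c) => [a b [aS ca] ab|//].
have bS : b \notin S by apply/negP => bS; move: aS; rewrite (cS _ _ (Ha (a, b) ab) bS).
split => //; apply: connect_trans ca (connect1 _).
by change ((a, b) \in proj2 S F); rewrite inE (ab : (a, b) \in F) bS.
Qed.

Lemma treeK w K F x y : basis_bicomponent w K -> y \in K -> Good w F ->
  in_tree_rooted_at F x y = rootF (proj1 K F) y && qS K x (proj2 K F).
Proof.
move=> hK yK [[Ha ind Hr] bbF uF].
change (rootF F y && connect (fr F) y x = rootF (proj1 K F) y && qS K x (proj2 K F)).
rewrite qS_proj2 rootF_proj1 //; case: (boolP (rootF F y)) => //= ry.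
apply/idP/existsP => [c|[k /andP[kK ck]]]; first by exists y; rewrite yK.
have [r rr crk] := Hr k.
have rK : r \in K := bb_reach_closed hK (forest_reach Ha crk) kK.
have ry' : r = y by apply: uF rr ry (bb_strong hK rK yK).
by rewrite -ry'; apply: connect_trans crk ck.
Qed.

Lemma Kplus_only w K L l v : v \in Kplus w K -> basis_bicomponent w L -> l \in L ->
  reach w l v -> L = K.
Proof.
rewrite inE => /andP[_ /forallP H] bL lL rlv; apply/eqP/negPn/negP => ne.
have := implyP (H L); rewrite bL ne => /(_ isT) /forallP /(_ l) /implyP /(_ lL).
by rewrite rlv.
Qed.

Lemma closed_Kplus w K : closedS w (Kplus w K).
Proof.
move=> u v uv vK; have [L bL [l lL lu]] := bb_exists w u.
have lv : reach w l v by apply: connect_trans lu (connect1 uv).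
have LK := Kplus_only vK bL lL lv; subst L.
rewrite inE; apply/andP; split; first by apply/existsP; exists l; rewrite lL.
apply/forallP => L'; apply/implyP => /andP[bL' ne]; apply/forallP => l'; apply/implyP => l'L'.
apply/negP => l'u; move: ne; rewrite (Kplus_only vK bL' l'L' (connect_trans l'u (connect1 uv))).
by rewrite eqxx.
Qed.

Lemma K_Kplus w K k : basis_bicomponent w K -> k \in K -> k \in Kplus w K.
Proof.
move=> hK kK; rewrite inE; apply/andP; split.
  by apply/existsP; exists k; rewrite kK /reach connect0.
apply/forallP => L; apply/implyP => /andP[bL ne]; apply/forallP => l; apply/implyP => lL.
apply/negP => lk; have lK := bb_reach_closed hK lk kK.
by move: ne; rewrite (bb_cls bL lL) (bb_cls hK lK) eqxx.
Qed.

Lemma rootK w K F v : Good w F -> v \in Kplus w K ->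
  exists2 r, r \in K & connect (fr F) r v.
Proof.
move=> [[Ha ind Hr] bbF uF] vK; have [r rr crv] := Hr v.
have := Kplus_only vK (bbF r rr) _ (forest_reach Ha crv); rewrite inE strong_refl => /(_ isT).
move=> E; exists r => //; by rewrite -E inE strong_refl.
Qed.

Lemma rootKplus w K F y : Good w F -> y \in Kplus w K -> rootF F y -> y \in K.
Proof.
move=> [_ bbF _] yK ry.
have E := Kplus_only yK (bbF y ry) (_ : y \in cls w y) (connect0 _ _).
by rewrite -E ?inE strong_refl.
Qed.

Lemma exK w K F x : basis_bicomponent w K -> Good w F ->
  [exists k in K, connect (fr F) k x] = [exists k in Kplus w K, connect (fr F) k x].
Proof.
move=> hK gF; apply/existsP/existsP => [[k /andP[kK ck]]|[k /andP[kK ck]]].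
  by exists k; rewrite K_Kplus.
have [r rK crk] := rootK gF kK; exists r; rewrite rK; exact: connect_trans crk ck.
Qed.

Lemma Ex0 w : Ex w (fun _ => 0) = 0.
Proof. by rewrite /Ex big1 ?mul0r // => F _; rewrite mul0r. Qed.

Lemma part2 w K i j c : (forall a b, 0 <= w a b) -> basis_bicomponent w K ->
  j \in Kplus w K :\: K -> is_arc w i j -> 0 < c -> Jbar (reweight w i j c) =2 Jbar w.
Proof.
move=> nn hK /setDP[jP jK] ij c0 x y.
set w' := reweight w i j c.
have Harc : is_arc w' = is_arc w.
  apply: functional_extensionality => a; apply: functional_extensionality => b.
  rewrite /is_arc /w' /reweight; case: ifP => // /andP[/eqP -> /eqP ->].
  by rewrite (gt_eqF c0); move: ij; rewrite /is_arc => ->.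
have HM : max_out_forests w' = max_out_forests w.
  by rewrite /max_out_forests /max_forest_size /out_forests /out_forest Harc.
have cS' : forall S, closedS w S -> closedS w' S by move=> S; rewrite /closedS Harc.
have nn' : forall a b, 0 <= w' a b.
  by move=> a b; rewrite /w' /reweight; case: ifP => _; [exact: ltW | exact: nn].
have fw : forall B, (i, j) \notin B -> fweight w' B = fweight w B.
  move=> B nB; apply: eq_bigr => [[a b]] aB /=; rewrite /w' /reweight.
  by case: ifP => // /andP[/eqP ea /eqP eb]; move: nB; rewrite -ea -eb aB.
have GG : forall F, Good w' F -> Good w F.
  by move=> F /maxGood; rewrite HM => /maxGood.
rewrite !JbarE.
set Sp := Kplus w K.
have cSp : closedS w Sp := @closed_Kplus w K.
have cK : closedS w K := fun u v => bb_closed hK.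
have fw2 : forall B, B \in proj2 Sp @: max_out_forests w -> fweight w' B = fweight w B.
  move=> _ /imsetP[F _ ->]; apply: fw; rewrite inE jP andbF //.
case: (boolP (y \in Sp)) => ySp; last first.
  pose Y := fun F => (1 : R) * (in_tree_rooted_at (proj2 Sp F) x y)%:R.
  rewrite (@Ex_eq w' _ Y); last by move=> F /GG [[Ha _ _] _ _]; rewrite /Y mul1r (treeA x cSp Ha ySp).
  rewrite (@Ex_eq w _ Y); last by move=> F [[Ha _ _] _ _]; rewrite /Y mul1r (treeA x cSp Ha ySp).
  by apply: (@Einv2 w w' Sp (fun B => (in_tree_rooted_at B x y)%:R)) => //; apply: cS'.
case: (boolP (y \in K)) => yK; last first.
  have Z : forall F, Good w F -> ((in_tree_rooted_at F x y)%:R : R) = 0.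
    move=> F gF; case: (boolP (in_tree_rooted_at F x y)) => // /andP[ry _].
    by move: yK; rewrite (rootKplus gF ySp ry).
  rewrite (Ex_eq Z) (@Ex_eq w' _ (fun _ => 0)) ?Ex0 // => F /GG; exact: Z.
pose g := fun A => ((rootF A y)%:R : R).
pose h := fun B => ((qS K x B)%:R : R).
have T : forall v, (forall F, Good v F -> Good w F) ->
    Ex v (fun F => (in_tree_rooted_at F x y)%:R) = Ex v (fun F => g (proj1 K F) * h (proj2 K F)).
  move=> v Hv; apply: Ex_eq => F /Hv gF; rewrite (treeK x hK yK gF) /g /h.
  by case: (rootF _ y); case: (qS _ _ _); rewrite ?mul1r ?mul0r.
rewrite (T w') // (T w) // (Efac g h (cS' _ cK) nn') (Efac g h cK nn).
congr (_ * _).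
  apply: Einv1 => //; first exact: cS'.
  move=> _ /imsetP[F _ ->]; apply: fw; rewrite inE negb_and /= jK orbT //.
have U : forall v, (forall F, Good v F -> Good w F) ->
    Ex v (fun F => 1 * h (proj2 K F)) = Ex v (fun F => 1 * (qS Sp x (proj2 Sp F))%:R).
  move=> v Hv; apply: Ex_eq => F /Hv gF; rewrite /h !qS_proj2 (exK x hK gF) //.
rewrite (U w') // (U w) //; by apply: (@Einv2 w w' Sp (fun B => (qS Sp x B)%:R)) => //; apply: cS'.
Qed.

Lemma treeK1 w (S : {set V}) F x y : closedS w S -> arcsF w F -> x \in S -> y \in S ->
  in_tree_rooted_at F x y = in_tree_rooted_at (proj1 S F) x y.
Proof.
move=> cS Ha xS yS.
change (rootF F y && connect (fr F) y x =
        rootF (proj1 S F) y && connect (fr (proj1 S F)) y x).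
rewrite rootF_proj1 //; congr (_ && _); apply/idP/idP => c; last first.
  by apply: connect_mono c => a b ab; move: (ab : (a, b) \in proj1 S F); rewrite inE => /andP[].
have H := @connect_bwd _ (fr F) (fun u => u \in S /\ connect (fr (proj1 S F)) u x) x
  (conj xS (connect0 _ _)).
case: (H _ y c) => [a b [bS cb] ab|//].
split; first exact: cS _ _ (Ha (a, b) ab) bS.
apply: connect_trans (connect1 _) cb.
by change ((a, b) \in proj1 S F); rewrite inE (ab : (a, b) \in F) bS.
Qed.

End Forest.

Section Part1.
Variables (R : realFieldType) (V : finType) (w : V -> V -> R) (K : {set V}).
Hypothesis hK : basis_bicomponent w K.
Local Notation V' := {x : V | x \in K}.
Local Notation wK := (restrict w K).
Local Open Scope ring_scope.

Definition pm (e : V' * V') : V * V := (val e.1, val e.2).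
Lemma pm_inj : injective pm.
Proof. by move=> [a b] [c d] [/val_inj -> /val_inj ->]. Qed.
Definition emb (A : {set V' * V'}) := pm @: A.

Lemma emb_mem A a b : ((val a, val b) \in emb A) = ((a, b) \in A).
Proof. by rewrite -[(val a, val b)]/(pm (a, b)) mem_imset //; exact: pm_inj. Qed.

Lemma emb_K A u v : (u, v) \in emb A -> u \in K /\ v \in K.
Proof. by case/imsetP => [[a b] _ [-> ->]]; rewrite !(valP a) (valP b). Qed.

Lemma emb_inj : injective emb.
Proof.
move=> A1 A2 E; apply/setP => [[a b]]; by rewrite -!emb_mem E.
Qed.

Lemma connect_sub (e : rel V) (e' : rel V') :
  (forall a b, e' a b = e (val a) (val b)) -> (forall u v, e u v -> v \in K -> u \in K) ->
  forall a b, connect e (val a) (val b) = connect e' a b.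
Proof.
move=> He cl a b; apply/idP/idP => c.
  have H := @connect_bwd _ e (fun u => exists2 u', val u' = u & connect e' u' b) (val b)
    (ex_intro2 _ _ b erefl (connect0 _ _)).
  have step : forall u v, (exists2 u', val u' = v & connect e' u' b) -> e u v ->
      exists2 u', val u' = u & connect e' u' b.
    move=> u v [v' Ev cv] uv.
    have uK : u \in K by apply: (cl _ _ uv); rewrite -Ev (valP v').
    exists (Sub u uK); first by rewrite SubK.
    by apply: connect_trans (connect1 _) cv; rewrite He SubK Ev.
  by case: (H step _ c) => a' /val_inj ->.
apply: (@connect_fwd _ e' (fun z => connect e (val a) (val z)) a (connect0 _ _)) c.
move=> u v cu uv; apply: connect_trans cu (connect1 _); by rewrite -He.
Qed.

Lemma reachK a b : reach w (val a) (val b) = reach wK a b.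
Proof. by apply: connect_sub => // u v; exact: bb_closed hK. Qed.

Lemma connK A a b : connect (fr (emb A)) (val a) (val b) = connect (fr A) a b.
Proof.
apply: connect_sub => [u v|u v uv _]; first by change (((u, v) \in A) = ((val u, val v) \in emb A)); rewrite emb_mem.
by case: (emb_K uv).
Qed.

Lemma rootK' A r : rootF (emb A) (val r) = rootF A r.
Proof.
apply/rootFP/rootFP => H k; first by rewrite -emb_mem; exact: H.
apply/negP => kr; have [kK _] := emb_K kr; move: (H (Sub k kK)).
by rewrite -emb_mem SubK kr.
Qed.

Lemma strongK a b : strong wK a b.
Proof. by rewrite /strong -!reachK; exact: (bb_strong hK (valP a) (valP b)). Qed.

Lemma clsT a : cls wK a = setT.
Proof. by apply/setP => b; rewrite !inE strongK. Qed.

Lemma bbT a : basis_bicomponent wK (cls wK a).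
Proof.
rewrite clsT; apply/andP; split.
  by apply/existsP; exists a; rewrite in_setT /= -(clsT a) eqxx.
by apply/forallP => i; apply/forallP => j; rewrite in_setT.
Qed.

Lemma GoodK A : Good wK A -> PS w K (emb A).
Proof.
move=> [[Ha ind Hr] _ uA]; split.
- move=> _ /imsetP[[a b] ab ->] /=; split; last exact: valP.
  exact: (Ha (a, b) ab).
- move=> u u' v /imsetP[[a b] ab [-> ->]] /imsetP[[a' b'] ab' [-> /val_inj Eb]].
  by subst b'; rewrite (ind _ _ _ ab ab').
- move=> v vK; have [r' rr' cr'v] := Hr (Sub v vK).
  exists (val r'); first by rewrite (valP r') rootK'.
  by rewrite -[v]/(val (Sub v vK : V')) connK.
- by move=> r rK _; rewrite -(bb_cls hK rK).
- move=> r r' rK r'K; rewrite -[r]/(val (Sub r rK : V')) -[r']/(val (Sub r' r'K : V')).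
  rewrite !rootK' => rr rr' _.
  have := uA _ _ rr rr' (strongK _ _); by move=> ->.
Qed.

Lemma KGood A : PS w K (emb A) -> Good wK A.
Proof.
move=> [Ha ind Hr _ uA]; split; first split.
- by move=> [a b] ab; have [] := Ha _ (imset_f pm ab).
- move=> u u' v uv u'v; apply: val_inj.
  by apply: (ind _ _ (val v)); rewrite emb_mem.
- move=> v; have [r /andP[rK rr] crv] := Hr _ (valP v).
  exists (Sub r rK); first by rewrite -rootK' SubK.
  by rewrite -connK SubK.
- by move=> r _; apply: bbT.
- move=> r r' rr rr' _; apply: val_inj; apply: uA; rewrite ?(valP r) ?(valP r') ?rootK' //.
  exact: (bb_strong hK (valP r) (valP r')).
Qed.

Lemma embM : emb @: max_out_forests wK = proj1 K @: max_out_forests w.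
Proof.
have cK : closedS w K := fun u v => bb_closed hK.
have [G0 gG0] := good_exists w.
apply/setP => A0; apply/imsetP/imsetP.
  move=> [A' /maxGood gA' ->]; have PA := GoodK gA'.
  exists (emb A' :|: proj2 K G0); last by case: (proj_comb G0 PA).
  by apply/maxGood; apply: combP.
move=> [F /maxGood gF ->]; have PA := restrP cK gF.
set A := proj1 K F in PA *.
have [PAa _ _ _ _] := PA.
have eA : A = emb [set e | pm e \in A].
  apply/setP => [[u v]]; apply/idP/idP => uv.
    have [a1 vK] := PAa _ uv; have uK : u \in K := cK _ _ a1 vK.
    rewrite -[u]/(val (Sub u uK : V')) -[v]/(val (Sub v vK : V')) emb_mem inE /pm /=.
    exact: uv.
  by case/imsetP: uv => e; rewrite inE => eA ->.
exists [set e | pm e \in A] => //; apply/maxGood; apply: KGood; by rewrite -eA.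
Qed.
Hypothesis nn : forall a b, 0 <= w a b.

Lemma fweight_emb A : fweight w (emb A) = fweight wK A.
Proof. by rewrite /fweight /emb big_imset //; exact: in2W pm_inj. Qed.

Lemma tree_emb A x y :
  in_tree_rooted_at (emb A) (val x) (val y) = in_tree_rooted_at A x y.
Proof.
change (rootF (emb A) (val y) && connect (fr (emb A)) (val y) (val x) =
        rootF A y && connect (fr A) y x).
by rewrite rootK' connK.
Qed.

Lemma part1 x y : Jbar wK x y = Jbar w (val x) (val y).
Proof.
have cK : closedS w K := fun u v => bb_closed hK.
rewrite !JbarE.
pose g := fun A => ((in_tree_rooted_at A (val x) (val y))%:R : R).
rewrite (@Ex_eq _ _ w _ (fun F => g (proj1 K F) * 1)); last first.
  by move=> F [[Ha _ _] _ _]; rewrite mulr1 /g (treeK1 cK Ha (valP x) (valP y)).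
rewrite (Esplit g (fun=> 1)) //.
have [p1 p2] := sums_gt0 K nn.
rewrite sum_1l divff ?gt_eqF // mulr1 -embM.
rewrite !(big_imset _ (in2W emb_inj)) /= /Ex; congr (_ / _); apply: eq_bigr => A _.
  by rewrite /g tree_emb fweight_emb.
by rewrite fweight_emb.
Qed.
End Part1.

Local Open Scope ring_scope.

Theorem corollary2 (R : realFieldType) (V : finType) (w : V -> V -> R)
  (w_noloop : forall i, w i i = 0) (w_nonneg : forall i j, 0 <= w i j)
  (K : {set V}) (hK : basis_bicomponent w K) :
  (forall x y : {x : V | x \in K},
      Jbar (restrict w K) x y = Jbar w (val x) (val y)) /\
  (forall i j : V, i \in Kplus w K -> j \in Kplus w K :\: K ->
      is_arc w i j ->
      forall c : R, 0 < c -> Jbar (reweight w i j c) =2 Jbar w).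
Proof.
split; first by move=> x y; apply: part1.
by move=> i j _ jK ij c c0; exact: (part2 w_nonneg hK jK ij c0).

Qed.
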